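(* Let $(\mathcal{S},d_{\mathcal{S}})$ and $(\mathcal{A},d_{\mathcal{A}})$ be metric spaces, $\gamma\in[0,1)$, and $\rho$ an initial state distribution on $\mathcal{S}$. Let $(\pi,p)$ and $(\pi',p')$ be two policy-configuration pairs such that $\pi'$ is $L_{\pi'}$-LC and $p'$ is $L_{p'}$-LC. If $\gamma L_{p'}(1+L_{\pi'})<1$, then $$\mathcal{W}\big(\mu_{\pi',p'},\mu_{\pi,p}\big)\le \frac{\gamma}{1-\gamma L_{p'}(1+L_{\pi'})}\int_{\mathcal{S}}\mu_{\pi,p}(ds)\,\mathcal{W}\big(p'_{\pi'}(\cdot|s),p_{\pi}(\cdot|s)\big).$$
   Context: A configuration is a Markov kernel $p$ assigning to each $(s,a)\in\mathcal{S}\times\mathcal{A}$ a probability measure $p(\cdot|s,a)$ on $\mathcal{S}$; a policy is a Markov kernel $\pi$ assigning to each $s$ a probability measure $\pi(\cdot|s)$ on $\mathcal{A}$. The state-state kernel is $p_\pi(ds'|s)=\int_{\mathcal{A}}\pi(da|s)p(ds'|s,a)$. The $\gamma$-discounted stationary distribution is $\mu_{\pi,p}=(1-\gamma)\sum_{t\ge0}\gamma^t\rho\, p_\pi^t$, equivalently the solution of $\mu_{\pi,p}=(1-\gamma)\rho+\gamma\,\mu_{\pi,p}p_\pi$. For probability measures $\mu,\nu$ on a metric space, $\mathcal{W}(\mu,\nu)=\sup_{\|f\|_L\le1}|\int f\,d(\mu-\nu)|$, where $\|f\|_L$ is the Lipschitz semi-norm. Product metrics are sums: $d_{\mathcal{S}\times\mathcal{A}}((s,a),(\bar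 s,\bar a))=d_{\mathcal{S}}(s,\bar s)+d_{\mathcal{A}}(a,\bar a)$. $p'$ is $L_{p'}$-LC if $\mathcal{W}(p'(\cdot|s,a),p'(\cdot|\bar s,\bar a))\le L_{p'}d_{\mathcal{S}\times\mathcal{A}}((s,a),(\bar s,\bar a))$ for all pairs; $\pi'$ is $L_{\pi'}$-LC if $\mathcal{W}(\pi'(\cdot|s),\pi'(\cdot|\bar s))\le L_{\pi'}d_{\mathcal{S}}(s,\bar s)$ for all $s,\bar s$. *)

(* Defs.v *)
From HB Require Import structures.
From mathcomp Require Import all_boot all_order all_algebra.
From mathcomp Require Import all_classical all_reals all_analysis.
Set Implicit Arguments. Unset Strict Implicit. Unset Printing Implicit Defensive.
Import Order.TTheory GRing.Theory Num.Theory.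
Local Open Scope classical_set_scope.
Local Open Scope ring_scope.

Section defs.
Context {R : realType}.

Definition is_metric {X : Type} (dX : X -> X -> R) : Prop :=
  (forall x y, 0 <= dX x y) /\ (forall x y, dX x y = 0 <-> x = y) /\
  (forall x y, dX x y = dX y x) /\ (forall x y z, dX x z <= dX x y + dX y z).

Definition dopen {X : Type} (dX : X -> X -> R) (U : set X) : Prop :=
  forall x, U x -> exists2 e : R, 0 < e & [set y | dX x y < e] `<=` U.

Definition borel_of {d} {X : measurableType d} (dX : X -> X -> R) : Prop :=
  forall A : set X, measurable A <-> <<s dopen dX >> A.

Definition lip1 {X : Type} (dX : X -> X -> R) (f : X -> R) : Prop :=
  forall x y, `|f x - f y| <= dX x y.

Definition W_test {d} {X : measurableType d} (dX : X -> X -> R) (f : X -> R) : Prop :=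
  [/\ measurable_fun setT f, exists M : R, forall x, `|f x| <= M & lip1 dX f].

Definition Wdist {d} {X : measurableType d} (dX : X -> X -> R)
    (mu nu : {measure set X -> \bar R}) : \bar R :=
  ereal_sup [set `| (\int[mu]_x (f x)%:E - \int[nu]_x (f x)%:E)%E |%E
            | f in W_test dX].

End defs.

Local Open Scope ereal_scope.

(** state-state kernel p_pi(ds'|s) = int_A pi(da|s) p(ds'|s,a) ; this is
    the library's kernel composition [pi \; p] (= kcomp pi p). *)
Definition ss_kernel {R : realType} {dS dA} {S : measurableType dS}
    {A : measurableType dA} (pi : R.-pker S ~> A) (p : R.-pker (S * A)%type ~> S)
    : R.-ker S ~> S := mkcomp pi p.

Section mpush.
Context {R : realType} {dS} {S : measurableType dS}.
Variables (m : {measure set S -> \bar R}) (K : R.-ker S ~> S).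

Definition mpush (U : set S) : \bar R := \int[m]_s K s U.

Let mpush0 : mpush set0 = 0.
Proof.
by rewrite /mpush (eq_integral (cst 0)) ?integral0// => y _; rewrite measure0.
Qed.

Let mpush_ge0 U : 0 <= mpush U. Proof. exact: integral_ge0. Qed.

Let mpush_sigma_additive : semi_sigma_additive mpush.
Proof.
move=> U mU tU mUU; rewrite [X in _ --> X](_ : _ =
  \int[m]_y (\sum_(n <oo) K y (U n))); last first.
  apply: eq_integral => V _.
  by apply/esym/cvg_lim => //; exact/measure_semi_sigma_additive.
apply/cvg_closeP; split.
  by apply: is_cvg_nneseries => n _ _; exact: integral_ge0.
rewrite closeE// integral_nneseries// => n.
exact: (measurable_kernel K _ (mU n)).
Qed.

HB.instance Definition _ := isMeasure.Build _ _ R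
  mpush mpush0 mpush_ge0 mpush_sigma_additive.

Definition mmpush : {measure set S -> \bar R} := mpush.
End mpush.

Fixpoint miter {R : realType} {dS} {S : measurableType dS}
    (rho : {measure set S -> \bar R}) (K : R.-ker S ~> S) (t : nat)
    : {measure set S -> \bar R} :=
  match t with 0 => rho | t'.+1 => mmpush (miter rho K t') K end.

Definition disc_stat {R : realType} {dS dA} {S : measurableType dS}
    {A : measurableType dA} (gamma : R) (rho : {measure set S -> \bar R})
    (pi : R.-pker S ~> A) (p : R.-pker (S * A)%type ~> S) (U : set S) : \bar R :=
  (1 - gamma)%:E *
    \sum_(0 <= t <oo) (gamma ^+ t)%:E * miter rho (ss_kernel pi p) t U.

(* Main.v *)
Require Import Defs.
From HB Require Import structures.
From mathcomp Require Import all_boot all_order all_algebra.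
From mathcomp Require Import all_classical all_reals all_analysis.
Import Order.TTheory GRing.Theory Num.Theory.
Local Open Scope classical_set_scope.
Local Open Scope ring_scope.

From mathcomp Require Import ring lra.
Import measurable_realfun.
Section basics.
Context {R : realType} {d} {X : measurableType d}.
Local Open Scope ereal_scope.

Definition Ei (m : {measure set X -> \bar R}) (g : X -> R) : R :=
  fine (\int[m]_x (g x)%:E).

Lemma int_bnd {m : {measure set X -> \bar R}} (m1 : m setT = 1)
  {g : X -> R} (mg : measurable_fun setT g) {M : R}
  (g0 : forall x, (0 <= g x)%R) (gM : forall x, (g x <= M)%R) :
  0 <= \int[m]_x (g x)%:E <= M%:E.
Proof.
apply/andP; split; first by apply: integral_ge0 => x _; rewrite lee_fin.
apply: (@le_trans _ _ (\int[m]_x (cst M%:E) x)).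
  apply: ge0_le_integral => //.
  - by move=> x _; rewrite lee_fin.
  - exact/measurable_EFinP.
  - by move=> x _; rewrite lee_fin.
by rewrite integral_cst// m1 mule1.
Qed.

Lemma int_fin {m : {measure set X -> \bar R}} (m1 : m setT = 1)
  {g : X -> R} (mg : measurable_fun setT g) {M : R}
  (g0 : forall x, (0 <= g x)%R) (gM : forall x, (g x <= M)%R) :
  \int[m]_x (g x)%:E = (Ei m g)%:E.
Proof.
have /andP[h1 h2] := int_bnd m1 mg g0 gM.
rewrite /Ei fineK// ge0_fin_numE//; exact: le_lt_trans h2 (ltry _).
Qed.

Lemma Ei_bnd {m : {measure set X -> \bar R}} (m1 : m setT = 1)
  {g : X -> R} (mg : measurable_fun setT g) {M : R}
  (g0 : forall x, (0 <= g x)%R) (gM : forall x, (g x <= M)%R) :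
  (0 <= Ei m g <= M)%R.
Proof.
have /andP[h1 h2] := int_bnd m1 mg g0 gM.
by rewrite (int_fin m1 mg g0 gM) !lee_fin in h1 h2; rewrite h1 h2.
Qed.

Lemma Ei_cst {m : {measure set X -> \bar R}} (m1 : m setT = 1) (c : R) :
  Ei m (fun _ => c) = c.
Proof. by rewrite /Ei integral_cst// m1 mule1. Qed.

End basics.
Section W1.
Context {R : realType} {d} {X : measurableType d}.
Local Open Scope ereal_scope.

Lemma W1 (dX : X -> X -> R) (mu nu : {measure set X -> \bar R})
  (mu1 : mu setT = 1) (nu1 : nu setT = 1)
  (g : X -> R) (mg : measurable_fun setT g) (M : R)
  (g0 : forall x, (0 <= g x)%R) (gM : forall x, (g x <= M)%R)
  (c : R) (c0 : (0 <= c)%R) (lip : forall x y, (`|g x - g y| <= c * dX x y)%R)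
  (x0 : X) :
  (`|Ei mu g - Ei nu g|)%:E <= c%:E * Wdist dX mu nu.
Proof.
have [cz|cp] := eqVneq c 0%R.
  have gc : forall x, g x = g x0.
    move=> x; apply/eqP; rewrite -subr_eq0 -normr_eq0 eq_le normr_ge0 andbT.
    by have := lip x x0; rewrite cz mul0r.
  rewrite cz mul0e.
  have -> : Ei mu g = g x0.
    by rewrite /Ei (eq_integral (cst (g x0)%:E)) ?integral_cst ?mu1 ?mule1// => x _; rewrite gc.
  have -> : Ei nu g = g x0.
    by rewrite /Ei (eq_integral (cst (g x0)%:E)) ?integral_cst ?nu1 ?mule1// => x _; rewrite gc.
  by rewrite subrr normr0.
have cpos : (0 < c)%R by rewrite lt_def cp c0.
pose f x := (g x / c)%R.
have mf : measurable_fun setT f by apply: measurable_funM => //.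
have fE (m : {measure set X -> \bar R}) : m setT = 1 ->
    \int[m]_x (f x)%:E = (Ei m g / c)%:E.
  move=> m1; rewrite (eq_integral (fun x => (c^-1)%:E * (g x)%:E)); last first.
    by move=> x _; rewrite /f -EFinM mulrC.
  rewrite ge0_integralZl//; last 3 first.
  - exact/measurable_EFinP.
  - by move=> x _; rewrite lee_fin.
  - by rewrite lee_fin invr_ge0.
  by rewrite (int_fin m1 mg g0 gM) -EFinM mulrC.
have tf : W_test dX f.
  split => //.
    exists (M / c)%R => x; rewrite /f ger0_norm ?divr_ge0//.
    by rewrite ler_pM2r ?invr_gt0.
  move=> x y; rewrite /f -mulrBl normrM [`|c^-1|%R]gtr0_norm ?invr_gt0//.
  by rewrite ler_pdivrMr// mulrC.
have := ereal_sup_ubound (ex_intro2 _ _ f tf erefl) : _ <= Wdist dX mu nu.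
rewrite !fE// -EFinB /= => h.
rewrite -mulrBl normrM [`|c^-1|%R]gtr0_norm ?invr_gt0// in h.
have -> : `|Ei mu g - Ei nu g|%:E = c%:E * (`|Ei mu g - Ei nu g| / c)%:E.
  by rewrite -EFinM mulrC mulfVK.
by apply: lee_wpmul2l => //; rewrite lee_fin.
Qed.
End W1.
Section mpush_int.
Context {R : realType} {dS} {S : measurableType dS}.
Variables (m : {measure set S -> \bar R}) (k : R.-ker S ~> S).
Local Open Scope ereal_scope.

Let integral_mpush_indic E (mE : measurable E) :
  \int[mmpush m k]_z (\1_E z)%:E = \int[m]_y (\int[k y]_z (\1_E z)%:E).
Proof.
rewrite integral_indic//= setIT.
by apply: eq_integral => y _; rewrite integral_indic// setIT.
Qed.

Import HBNNSimple.

Let integral_mpush_nnsfun (f : {nnsfun S >-> R}) :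
  \int[mmpush m k]_z (f z)%:E = \int[m]_y (\int[k y]_z (f z)%:E).
Proof.
under [in LHS]eq_integral do rewrite fimfunE -fsumEFin//.
rewrite ge0_integral_fsum//; last 2 first.
  - by move=> r; exact/measurable_EFinP/measurableT_comp.
  - by move=> r z _; rewrite EFinM nnfun_muleindic_ge0.
under [in RHS]eq_integral.
  move=> y _.
  under eq_integral.
    by move=> z _; rewrite fimfunE -fsumEFin//; over.
  rewrite /= ge0_integral_fsum//; last 2 first.
    - by move=> r; exact/measurable_EFinP/measurableT_comp.
    - by move=> r z _; rewrite EFinM nnfun_muleindic_ge0.
  under eq_fsbigr.
    move=> r _.
    rewrite (integralZl_indic _ (fun r => f @^-1` [set r]))//; last first.
      by move=> r0; rewrite preimage_nnfun0.
    rewrite integral_indic// setIT.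
    over.
  over.
rewrite /= ge0_integral_fsum//; last 2 first.
  - move=> r; apply: measurable_funeM.
    exact: (measurable_kernel k (f @^-1` [set r]) _).
  - move=> n y _.
    have := mulemu_ge0 (fun n => f @^-1` [set n]).
    by apply; exact: preimage_nnfun0.
apply: eq_fsbigr => r _.
rewrite (integralZl_indic _ (fun r => f @^-1` [set r]))//; last first.
  exact: preimage_nnfun0.
rewrite /= integral_mpush_indic//.
have [r0|r0] := leP 0%R r.
  rewrite ge0_integralZl//.
    by under eq_integral do rewrite integral_indic// setIT.
  exact: (measurable_kernel k (f @^-1` [set r]) _).
rewrite integral0_eq ?mule0.
  by rewrite integral0_eq// => y _; rewrite preimage_nnfun0// measure0 mule0.
by move=> y _; rewrite integral0_eq// => z _; rewrite preimage_nnfun0// indic0.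
Qed.

Lemma integral_mpush f : (forall z, 0 <= f z) -> measurable_fun [set: S] f ->
  \int[mmpush m k]_z f z = \int[m]_y (\int[k y]_z f z).
Proof.
move=> f0 mf.
pose f_ := nnsfun_approx measurableT mf.
transitivity (\int[mmpush m k]_z (lim ((f_ n z)%:E @[n --> \oo]))).
  by apply/eq_integral => z _; apply/esym/cvg_lim => //=; exact: cvg_nnsfun_approx.
rewrite monotone_convergence//; last 3 first.
  by move=> n; exact/measurable_EFinP.
  by move=> n z _; rewrite lee_fin.
  by move=> z _ a b ab; rewrite lee_fin; exact/lefP/nd_nnsfun_approx.
rewrite (_ : (fun _ => _) =
    (fun n => \int[m]_y (\int[k y]_z (f_ n z)%:E)))//; last first.
  by apply/funext => n; rewrite integral_mpush_nnsfun.
transitivity (\int[m]_y lim ((\int[k y]_z (f_ n z)%:E) @[n --> \oo])).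
  rewrite -monotone_convergence//; last 3 first.
  - move=> n; apply: measurable_fun_integral_kernel => //.
    + by move=> U mU; exact: (measurable_kernel k _ mU).
    + by move=> z; rewrite lee_fin.
    + exact/measurable_EFinP.
  - by move=> n y _; apply: integral_ge0 => // z _; rewrite lee_fin.
  - move=> y _ a b ab; apply: ge0_le_integral => //.
    + by move=> z _; rewrite lee_fin.
    + exact/measurable_EFinP.
    + exact/measurable_EFinP.
    + by move=> z _; rewrite lee_fin; exact/lefP/nd_nnsfun_approx.
apply: eq_integral => y _; rewrite -monotone_convergence//; last 3 first.
  - by move=> n; exact/measurable_EFinP.
  - by move=> n z _; rewrite lee_fin.
  - by move=> z _ a b ab; rewrite lee_fin; exact/lefP/nd_nnsfun_approx.
by apply: eq_integral => z _; apply/cvg_lim => //; exact: cvg_nnsfun_approx.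
Qed.

End mpush_int.
Section kop.
Context {R : realType} {d d'} {X : measurableType d} {Y : measurableType d'}.
Local Open Scope ereal_scope.

Definition Kop (K : Y -> {measure set X -> \bar R}) (g : X -> R) (y : Y) : R :=
  Ei (K y) g.

Variables (K : R.-ker Y ~> X) (K1 : forall y, K y setT = 1).

Lemma Kop_meas (g : X -> R) : measurable_fun setT g -> (forall x, (0 <= g x)%R) ->
  measurable_fun setT (Kop K g).
Proof.
move=> mg g0.
apply: (measurableT_comp (fine_measurable _)) => //.
apply: measurable_fun_integral_kernel.
- by move=> U mU; exact: measurable_kernel.
- by move=> x; rewrite lee_fin.
- exact/measurable_EFinP.
Qed.

Lemma Kop_bnd (g : X -> R) (mg : measurable_fun setT g) (M : R) (g0 : forall x, (0 <= g x)%R)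
  (gM : forall x, (g x <= M)%R) y : (0 <= Kop K g y <= M)%R.
Proof. exact: Ei_bnd. Qed.

Lemma Kop_E (g : X -> R) (mg : measurable_fun setT g) (M : R) (g0 : forall x, (0 <= g x)%R)
  (gM : forall x, (g x <= M)%R) y : (Kop K g y)%:E = \int[K y]_x (g x)%:E.
Proof. by rewrite /Kop (int_fin (K1 y) mg g0 gM). Qed.

End kop.
Lemma geo_sum {R : realType} (gamma : R) (g0 : (0 <= gamma)%R) (g1 : (gamma < 1)%R) :
  (\sum_(0 <= k <oo) (gamma ^+ k)%:E)%E = ((1 - gamma)^-1)%:E.
Proof.
have gn : (`|gamma| < 1)%R by rewrite ger0_norm.
apply: cvg_lim => //; apply/fine_cvgP; split.
  by apply: nearW => n; rewrite sumEFin.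
have h := cvg_geometric_series (a:=1) gn.
rewrite div1r in h.
apply: cvg_trans h; apply: near_eq_cvg; apply: nearW => n /=.
by rewrite sumEFin /series /=; apply: eq_bigr => k _; rewrite /geometric mul1r.
Qed.

Section stat.
Context {R : realType} {dS} {S : measurableType dS}.
Variables (gamma : R) (g0 : (0 <= gamma)%R) (g1 : (gamma < 1)%R).
Variables (rho : {measure set S -> \bar R}) (rho1 : rho setT = 1%E).
Variables (K : R.-ker S ~> S) (K1 : forall s, K s setT = 1%E).
Variables (mu : {measure set S -> \bar R})
  (mu_def : forall U, measurable U -> mu U =
     ((1 - gamma)%:E * \sum_(0 <= t <oo) (gamma ^+ t)%:E * miter rho K t U)%E).
Local Open Scope ereal_scope.

Lemma miter1 t : miter rho K t setT = 1.
Proof.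
elim: t => [//|t IH] /=.
by rewrite /mpush (eq_integral (cst 1)) ?integral_cst ?IH ?mul1e// => s _.
Qed.

Let g1' : (0 <= 1 - gamma)%R. Proof. by rewrite subr_ge0 ltW. Qed.

Let gt (t : nat) : (0 <= gamma ^+ t)%R. Proof. exact: exprn_ge0. Qed.

Let Dm := mscale (NngNum g1')
  (mseries (fun t => mscale (NngNum (gt t)) (miter rho K t)) 0).

Lemma int_mu f : (forall x, 0 <= f x) -> measurable_fun setT f ->
  \int[mu]_x f x =
  (1 - gamma)%:E * \sum_(0 <= t <oo) (gamma ^+ t)%:E * \int[miter rho K t]_x f x.
Proof.
move=> f0 mf.
rewrite (eq_measure_integral Dm); last first.
  by move=> U mU _; rewrite mu_def.
rewrite ge0_integral_mscale//= ge0_integral_measure_series//.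
congr (_ * _); apply: eq_eseriesr => t _.
by rewrite ge0_integral_mscale.
Qed.

Lemma mu1 : mu setT = 1.
Proof.
rewrite mu_def//.
under eq_eseriesr do rewrite miter1 mule1.
by rewrite geo_sum// -EFinM mulfV// subr_eq0 gt_eqF.
Qed.

Lemma stat f : (forall x, 0 <= f x) -> measurable_fun setT f ->
  \int[mu]_x f x = (1 - gamma)%:E * \int[rho]_x f x +
                   gamma%:E * \int[mu]_s (\int[K s]_x f x).
Proof.
move=> f0 mf.
have Pf0 s : 0 <= \int[K s]_x f x by apply: integral_ge0.
have mPf : measurable_fun setT (fun s => \int[K s]_x f x).
  apply: measurable_fun_integral_kernel => //.
  by move=> U mU; exact: measurable_kernel.
rewrite int_mu// (int_mu (fun s => \int[K s]_x f x))//.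
rewrite nneseries_recl//; last first.
  by move=> k _; apply: mule_ge0; [rewrite lee_fin|exact: integral_ge0].
rewrite /= expr0 mul1e -(@nneseries_addn _ _ 1); last first.
  by move=> k; apply: mule_ge0; [rewrite lee_fin|exact: integral_ge0].
under eq_eseriesr => k _.
  rewrite addn1 /= integral_mpush// exprS EFinM -muleA.
  over.
rewrite nneseriesZl; last first.
  by move=> k _; apply: mule_ge0; [rewrite lee_fin|exact: integral_ge0].
rewrite muleDr//; last first.
  apply: ge0_adde_def; rewrite inE; first exact: integral_ge0.
  apply: mule_ge0; first by rewrite lee_fin.
  by apply: nneseries_ge0 => k _ _; apply: mule_ge0; [rewrite lee_fin|exact: integral_ge0].
by congr (_ + _); rewrite muleA [X in X * _]muleC -muleA.
Qed.

Lemma statR (g : S -> R) (mg : measurable_fun setT g) (M : R)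
  (gp : forall x, (0 <= g x)%R) (gM : forall x, (g x <= M)%R) :
  Ei mu g = ((1 - gamma) * Ei rho g + gamma * Ei mu (Kop K g))%R.
Proof.
have := stat (fun x => (g x)%:E).
rewrite (int_fin mu1 mg gp gM) (int_fin rho1 mg gp gM).
rewrite (eq_integral (fun s => (Kop K g s)%:E)); last first.
  by move=> s _; rewrite (Kop_E K K1 g mg M gp gM).
rewrite (int_fin mu1 (Kop_meas K g mg gp) (fun s => proj1 (andP (Kop_bnd K K1 g mg M gp gM s)))
  (fun s => proj2 (andP (Kop_bnd K K1 g mg M gp gM s)))).
rewrite -!EFinM -EFinD => h.
have hp : forall x, (0%R <= (g x)%:E) by move=> x; rewrite lee_fin.
have hm : measurable_fun setT (fun x => (g x)%:E) by exact/measurable_EFinP.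
by case: (h hp hm).
Qed.

End stat.
Section shift.
Context {R : realType} {d} {X : measurableType d}.
Local Open Scope ereal_scope.

Lemma Ei_le_shift {m : {measure set X -> \bar R}} (m1 : m setT = 1)
  {f h : X -> R} (mf : measurable_fun setT f) (mh : measurable_fun setT h) {M : R}
  (f0 : forall x, (0 <= f x)%R) (fM : forall x, (f x <= M)%R)
  (h0 : forall x, (0 <= h x)%R) (hM : forall x, (h x <= M)%R)
  {e : R} (e0 : (0 <= e)%R) (fh : forall x, (f x <= h x + e)%R) :
  (Ei m f <= Ei m h + e)%R.
Proof.
rewrite -lee_fin -(int_fin m1 mf f0 fM) EFinD -(int_fin m1 mh h0 hM).
have -> : e%:E = \int[m]_x (cst e%:E) x by rewrite integral_cst// m1 mule1.
rewrite -ge0_integralD//; last 2 first.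
- by move=> x _; rewrite lee_fin.
- exact/measurable_EFinP.
apply: ge0_le_integral => //.
- by move=> x _; rewrite lee_fin.
- exact/measurable_EFinP.
- by apply: emeasurable_funD => //; exact/measurable_EFinP.
- by move=> x _; rewrite /= -EFinD lee_fin.
Qed.

Lemma Ei_abs_shift {m : {measure set X -> \bar R}} (m1 : m setT = 1)
  {f h : X -> R} (mf : measurable_fun setT f) (mh : measurable_fun setT h) {M : R}
  (f0 : forall x, (0 <= f x)%R) (fM : forall x, (f x <= M)%R)
  (h0 : forall x, (0 <= h x)%R) (hM : forall x, (h x <= M)%R)
  {e : R} (e0 : (0 <= e)%R) (fh : forall x, (`|f x - h x| <= e)%R) :
  (`|Ei m f - Ei m h| <= e)%R.
Proof.
have H1 := Ei_le_shift m1 mh mf h0 hM f0 fM e0.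
have H2 := Ei_le_shift m1 mf mh f0 fM h0 hM e0.
have [x1 x2] : (forall x, h x <= f x + e)%R /\ (forall x, f x <= h x + e)%R.
  by split => x; move: (fh x); rewrite ler_norml => /andP[a b]; lra.
move: (H1 x1) (H2 x2); rewrite ler_norml => a b; apply/andP; split; lra.
Qed.

End shift.
Section W2.
Context {R : realType} {dS dA : measure_display} {S : measurableType dS}
  {A : measurableType dA}.
Local Open Scope ereal_scope.

Lemma ss1 (pi : R.-pker S ~> A) (p : R.-pker (S * A)%type ~> S) s :
  ss_kernel pi p s setT = 1.
Proof.
rewrite /ss_kernel /= /kcomp (eq_integral (cst 1)) ?integral_cst ?prob_kernel ?mul1e//.
by move=> a _; rewrite prob_kernel.
Qed.

Lemma Kop_ss (pi : R.-pker S ~> A) (p : R.-pker (S * A)%type ~> S)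
  (g : S -> R) (mg : measurable_fun setT g) (M : R)
  (g0 : forall x, (0 <= g x)%R) (gM : forall x, (g x <= M)%R) s :
  Kop (ss_kernel pi p) g s = Ei (pi s) (fun a => Kop p g (s, a)).
Proof.
rewrite /Kop /Ei; congr fine.
rewrite /ss_kernel integral_kcomp; first last.
  - exact/measurable_EFinP.
  - by move=> x; rewrite lee_fin.
apply: eq_integral => a _.
by rewrite (Kop_E p (@prob_kernel _ _ _ _ _ p) g mg M g0 gM).
Qed.


Lemma W2 (distS : S -> S -> R) (distA : A -> A -> R)
  (metS : is_metric distS) (metA : is_metric distA)
  (pi' : R.-pker S ~> A) (p' : R.-pker (S * A)%type ~> S)
  (Lpi Lp : R) (Lpi0 : (0 <= Lpi)%R) (Lp0 : (0 <= Lp)%R)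
  (pi'LC : forall s sb : S,
        (Wdist distA (pi' s) (pi' sb) <= (Lpi * distS s sb)%:E)%E)
  (p'LC : forall (s sb : S) (a ab : A),
        (Wdist distS (p' (s, a)) (p' (sb, ab))
           <= (Lp * (distS s sb + distA a ab))%:E)%E)
  (g : S -> R) (mg : measurable_fun setT g) (M : R)
  (g0 : forall x, (0 <= g x)%R) (gM : forall x, (g x <= M)%R)
  (c : R) (c0 : (0 <= c)%R) (lip : forall x y, (`|g x - g y| <= c * distS x y)%R)
  (s sb : S) :
  (`|Kop (ss_kernel pi' p') g s - Kop (ss_kernel pi' p') g sb|
     <= c * (Lp * (1 + Lpi)) * distS s sb)%R.
Proof.
have [a0 _] : exists a : A, True.
  apply: contrapT => nA.
  have eA : [set: A] = set0.
    by apply/seteqP; split => a // _; apply: nA; exists a.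
  move: (@prob_kernel _ _ _ _ _ pi' s); rewrite eA measure0 => /eqP.
  by rewrite eq_sym eqe oner_eq0.
pose G := Kop p' g.
have mG : measurable_fun setT G := Kop_meas p' g mg g0.
have Gb z : (0 <= G z <= M)%R := Kop_bnd p' (@prob_kernel _ _ _ _ _ p') g mg M g0 gM z.
have G0 z : (0 <= G z)%R by case/andP: (Gb z).
have GM z : (G z <= M)%R by case/andP: (Gb z).
have daa a : distA a a = 0%R by apply/(metA.2.1 a a).2.
have dss x : distS x x = 0%R by apply/(metS.2.1 x x).2.
have GL1 a : (`|G (s, a) - G (sb, a)| <= c * Lp * distS s sb)%R.
  have := W1 distS _ _ (@prob_kernel _ _ _ _ _ p' (s, a))
    (@prob_kernel _ _ _ _ _ p' (sb, a)) g mg M g0 gM c c0 lip s.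
  move/le_trans => /(_ _ (lee_wpmul2l _ (p'LC s sb a a))).
  rewrite daa addr0 -EFinM mulrA => /(_ ltac:(by rewrite lee_fin)).
  by rewrite lee_fin.
have GL2 a ab : (`|G (sb, a) - G (sb, ab)| <= c * Lp * distA a ab)%R.
  have := W1 distS _ _ (@prob_kernel _ _ _ _ _ p' (sb, a))
    (@prob_kernel _ _ _ _ _ p' (sb, ab)) g mg M g0 gM c c0 lip s.
  move/le_trans => /(_ _ (lee_wpmul2l _ (p'LC sb sb a ab))).
  rewrite dss add0r -EFinM mulrA => /(_ ltac:(by rewrite lee_fin)).
  by rewrite lee_fin.
have mGs x : measurable_fun setT (fun a => G (x, a)) := measurable_fun_pair2 x mG.
have T1 : (`|Ei (pi' s) (fun a => G (s, a)) - Ei (pi' s) (fun a => G (sb, a))|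
    <= c * Lp * distS s sb)%R.
  apply: (Ei_abs_shift (@prob_kernel _ _ _ _ _ pi' s) (mGs s) (mGs sb)) => //.
  by rewrite mulr_ge0 ?mulr_ge0//; case: metS.
have T2 : (`|Ei (pi' s) (fun a => G (sb, a)) - Ei (pi' sb) (fun a => G (sb, a))|
    <= c * Lp * (Lpi * distS s sb))%R.
  have := W1 distA _ _ (@prob_kernel _ _ _ _ _ pi' s) (@prob_kernel _ _ _ _ _ pi' sb)
    _ (mGs sb) M (fun a => G0 (sb, a)) (fun a => GM (sb, a)) _ (mulr_ge0 c0 Lp0) GL2 a0.
  move/le_trans => /(_ _ (lee_wpmul2l _ (pi'LC s sb))).
  rewrite -EFinM => /(_ ltac:(by rewrite lee_fin mulr_ge0)).
  by rewrite lee_fin.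
rewrite !(Kop_ss pi' p' g mg M g0 gM).
apply: le_trans (ler_distD (Ei (pi' s) (fun a => G (sb, a))) _ _) _.
have -> : (c * (Lp * (1 + Lpi)) * distS s sb = c * Lp * distS s sb + c * Lp * (Lpi * distS s sb))%R by ring.
exact: lerD.
Qed.

End W2.
Section diff.
Context {R : realType} {d} {X : measurableType d}.
Local Open Scope ereal_scope.

Lemma le_int_nm (m : {measure set X -> \bar R}) (f g : X -> \bar R) :
  (forall x, 0 <= f x) -> (forall x, f x <= g x) ->
  \int[m]_x f x <= \int[m]_x g x.
Proof.
move=> f0 fg.
have g0 x : 0 <= g x by apply: le_trans (f0 x) (fg x).
rewrite !ge0_integralTE//; apply: le_ereal_sup => _ [h /= hf <-].
exists h => //= x; exact: le_trans (hf x) (fg x).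
Qed.

Lemma int_diff_le (m : {measure set X -> \bar R}) (m1 : m setT = 1)
  (f h : X -> R) (mf : measurable_fun setT f) (mh : measurable_fun setT h) (M : R)
  (f0 : forall x, (0 <= f x)%R) (fM : forall x, (f x <= M)%R)
  (h0 : forall x, (0 <= h x)%R) (hM : forall x, (h x <= M)%R)
  (W : X -> \bar R) (W0 : forall x, 0 <= W x) (c : R) (c0 : (0 <= c)%R)
  (fhW : forall x, (`|f x - h x|)%:E <= c%:E * W x) :
  (`|Ei m f - Ei m h|)%:E <= c%:E * \int[m]_x W x.
Proof.
have intg (g : X -> R) : measurable_fun setT g -> (forall x, (0 <= g x)%R) ->
    (forall x, (g x <= M)%R) -> m.-integrable setT (EFin \o g).
  move=> mg g0 gM; apply/integrableP; split; first exact/measurable_EFinP.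
  rewrite (eq_integral (fun x => (g x)%:E)); last first.
    by move=> x _ /=; rewrite ger0_norm.
  have /andP[_ +] := int_bnd m1 mg g0 gM.
  by move/le_lt_trans; apply; exact: ltry.
rewrite -abse_EFin.
have -> : (Ei m f - Ei m h)%:E = \int[m]_x ((f x)%:E - (h x)%:E).
  rewrite integralB//; [|exact: intg|exact: intg].
  by rewrite (int_fin m1 mf f0 fM) (int_fin m1 mh h0 hM).
apply: le_trans (le_abse_integral _ _ _) _ => //.
  by apply: emeasurable_funB; exact/measurable_EFinP.
under eq_integral do rewrite -EFinB abse_EFin.
have [cz|cp] := eqVneq c 0%R.
  rewrite cz in fhW *; rewrite mul0e integral0_eq// => x _.
  apply/eqP; rewrite eq_le [X in _ && X]lee_fin normr_ge0 andbT.
  by have := fhW x; rewrite mul0e.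
have cpos : (0 < c)%R by rewrite lt_def cp c0.
rewrite (eq_integral (fun x => c%:E * (`|f x - h x| / c)%:E)); last first.
  by move=> x _; rewrite -EFinM mulrC divfK.
rewrite ge0_integralZl//; last 2 first.
- apply/measurable_EFinP; apply: measurable_funM => //.
  by apply: measurableT_comp => //; exact: measurable_funB.
- by move=> x _; rewrite lee_fin divr_ge0.
apply: lee_wpmul2l; first by rewrite lee_fin.
apply: le_int_nm; first by move=> x; rewrite lee_fin divr_ge0.
move=> x; have := fhW x; have := W0 x.
case: (W x) => [r| |] //= _.
  by rewrite -EFinM !lee_fin ler_pdivrMr// mulrC.
by move=> _; exact: leey.
Qed.

End diff.
Section misc.
Context {R : realType} {d} {X : measurableType d}.
Local Open Scope ereal_scope.

Lemma Wdist_ge0 (dX : X -> X -> R) (metX : is_metric dX)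
  (mu nu : {measure set X -> \bar R}) : 0 <= Wdist dX mu nu.
Proof.
have t0 : W_test dX (fun _ => 0%R).
  split; first exact: measurable_cst.
    by exists 0%R => x; rewrite normr0.
  by move=> x y; rewrite subrr normr0; case: metX.
apply: le_trans (ereal_sup_ubound (ex_intro2 _ _ _ t0 erefl)).
by rewrite /= !integral0 subee// abse0.
Qed.

Lemma test_shift (m : {measure set X -> \bar R}) (m1 : m setT = 1)
  (f : X -> R) (mf : measurable_fun setT f) (M : R) (M0 : (0 <= M)%R)
  (fM : forall x, (`|f x| <= M)%R) :
  \int[m]_x (f x)%:E = (Ei m (fun x => f x + M)%R - M)%:E.
Proof.
have g0 x : (0 <= f x + M)%R.
  by have := fM x; rewrite ler_norml => /andP[a _]; lra.
have gM x : (f x + M <= M + M)%R.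
  by have := fM x; rewrite ler_norml => /andP[_ a]; lra.
have mg : measurable_fun setT (fun x => f x + M)%R.
  by apply: measurable_funD => //; exact: measurable_cst.
have intg (g : X -> R) (N : R) : measurable_fun setT g -> (forall x, (0 <= g x)%R) ->
    (forall x, (g x <= N)%R) -> m.-integrable setT (EFin \o g).
  move=> mg' g0' gM'; apply/integrableP; split; first exact/measurable_EFinP.
  rewrite (eq_integral (fun x => (g x)%:E)); last first.
    by move=> x _ /=; rewrite ger0_norm.
  have /andP[_ +] := int_bnd m1 mg' g0' gM'.
  by move/le_lt_trans; apply; exact: ltry.
rewrite EFinB -(int_fin m1 mg g0 gM).
have -> : M%:E = \int[m]_x (cst M%:E) x by rewrite integral_cst// m1 mule1.
rewrite -integralB//; last 2 first.
- exact: (intg _ _ mg g0 gM).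
- apply: (intg (fun _ => M) M) => //; exact: measurable_cst.
by apply: eq_integral => x _; rewrite /= -EFinB addrK.
Qed.

End misc.

Lemma step_alg {R : realType} (g a b c d e f : R) :
  a = (1 - g) * c + g * d -> b = (1 - g) * c + g * e ->
  a - b = g * (d - f) + g * (f - e).
Proof. by move=> -> ->; ring. Qed.

Lemma ind_alg {R : realType} (g Lc c r M gn : R) :
  1 - g * Lc != 0 ->
  g * (gn * M + g * (c * Lc) * r / (1 - g * Lc)) + g * (c * r) =
  g * gn * M + g * c * r / (1 - g * Lc).
Proof. by move=> h; field. Qed.

Lemma fin_alg {R : realType} (g q r : R) : 1 - q != 0 ->
  g * 1 * r / (1 - q) = g / (1 - q) * r.
Proof. by move=> h; field. Qed.

Lemma ind_alg2 {R : realType} (g Lp Lpi c r M gn : R) :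
  1 - g * Lp * (1 + Lpi) != 0 ->
  g * (gn * M + g * (c * (Lp * (1 + Lpi))) * r / (1 - g * Lp * (1 + Lpi))) + g * (c * r) =
  g * gn * M + g * c * r / (1 - g * Lp * (1 + Lpi)).
Proof. by move=> h; field. Qed.

Lemma contra_alg {R : realType} (D B a b : R) : D <= a + B -> a <= b -> b < D - B -> False.
Proof. by move=> *; lra. Qed.

Lemma zero_alg {R : realType} (x y z : R) : x = 0 * y + 0 * z -> `|x| = 0.
Proof. by move=> ->; rewrite !mul0r addr0 normr0. Qed.

Lemma ind_step {R : realType} (g x y B1 B2 : R) : 0 <= g -> `|x| <= B1 -> `|y| <= B2 ->
  `|g * x + g * y| <= g * B1 + g * B2.
Proof.
move=> g0 h1 h2; apply: le_trans (ler_normD _ _) _.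
rewrite !normrM ger0_norm//; apply: lerD; exact: ler_wpM2l.
Qed.

Lemma efin_le {R : realType} (a c r : R) : (a%:E <= c%:E * r%:E)%E -> a <= c * r.
Proof. by rewrite -EFinM lee_fin. Qed.


Theorem theorem1 (R : realType)
    (dS dA : measure_display) (S : measurableType dS) (A : measurableType dA)
    (dist_S : S -> S -> R) (dist_A : A -> A -> R)
    (metS : is_metric dist_S) (metA : is_metric dist_A)
    (borS : borel_of dist_S) (borA : borel_of dist_A)
    (gamma : R) (gamma0 : 0 <= gamma) (gamma1 : gamma < 1)
    (rho : probability S R)
    (pi pi' : R.-pker S ~> A) (p p' : R.-pker (S * A)%type ~> S)
    (mu mu' : {measure set S -> \bar R})
    (mu_def : forall U, measurable U -> mu U = disc_stat gamma rho pi p U)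
    (mu'_def : forall U, measurable U -> mu' U = disc_stat gamma rho pi' p' U)
    (L_pi' L_p' : R) (L_pi'0 : 0 <= L_pi') (L_p'0 : 0 <= L_p')
    (pi'LC : forall s sb : S,
        (Wdist dist_A (pi' s) (pi' sb) <= (L_pi' * dist_S s sb)%:E)%E)
    (p'LC : forall (s sb : S) (a ab : A),
        (Wdist dist_S (p' (s, a)) (p' (sb, ab))
           <= (L_p' * (dist_S s sb + dist_A a ab))%:E)%E)
    (contr : gamma * L_p' * (1 + L_pi') < 1) :
  (Wdist dist_S mu' mu
   <= (gamma / (1 - gamma * L_p' * (1 + L_pi')))%:E *
      \int[mu]_s Wdist dist_S (ss_kernel pi' p' s) (ss_kernel pi p s))%E.
Proof.
have rho1 : rho setT = 1%E := probability_setT rho.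
have K1 := ss1 pi p.
have K'1 := ss1 pi' p'.
have mu1' : mu setT = 1%E := @mu1 _ _ _ gamma gamma0 gamma1 rho rho1 _ K1 mu mu_def.
have mu'1 : mu' setT = 1%E := @mu1 _ _ _ gamma gamma0 gamma1 rho rho1 _ K'1 mu' mu'_def.
have st := @statR _ _ _ gamma gamma0 gamma1 rho rho1 _ K1 mu mu_def.
have st' := @statR _ _ _ gamma gamma0 gamma1 rho rho1 _ K'1 mu' mu'_def.
set K := ss_kernel pi p.
set K' := ss_kernel pi' p'.
have q1 : 0 < 1 - gamma * L_p' * (1 + L_pi') by rewrite subr_gt0.
have qn : 1 - gamma * L_p' * (1 + L_pi') != 0 by rewrite gt_eqF.
suff red : forall (g : S -> R) (M : R), measurable_fun setT g ->
    (forall x, 0 <= g x) -> (forall x, g x <= M) ->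
    (forall x y, `|g x - g y| <= 1 * dist_S x y) ->
    ((`|Ei mu' g - Ei mu g|)%:E <=
     (gamma / (1 - gamma * L_p' * (1 + L_pi')))%:E *
      \int[mu]_s Wdist dist_S (K' s) (K s))%E.
  apply: ge_ereal_sup => _ [f [mf [M fM] lf] <-].
  have fM' x : `|f x| <= `|M| by apply: le_trans (fM x) (ler_norm _).
  rewrite (test_shift _ mu'1 _ mf _ (normr_ge0 M) fM') (test_shift _ mu1' _ mf _ (normr_ge0 M) fM').
  rewrite -EFinB abse_EFin.
  have -> : (Ei mu' (fun x => f x + `|M|) - `|M| - (Ei mu (fun x => f x + `|M|) - `|M|))
     = Ei mu' (fun x => f x + `|M|) - Ei mu (fun x => f x + `|M|) by ring.
  apply: (red _ (`|M| + `|M|)).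
  - by apply: measurable_funD => //; exact: measurable_cst.
  - by move=> x; have := fM' x; rewrite ler_norml => /andP[a _]; lra.
  - by move=> x; have := fM' x; rewrite ler_norml => /andP[_ a]; lra.
  - by move=> x y; rewrite mul1r (_ : f x + `|M| - (f y + `|M|) = f x - f y); [apply: lf | ring].
move=> g1 M1 mg1 g10 g1M lip1'.
have W0 s : (0 <= Wdist dist_S (K' s) (K s))%E by apply: Wdist_ge0.
have I0 : (0 <= \int[mu]_s Wdist dist_S (K' s) (K s))%E by apply: integral_ge0.
have step (g : S -> R) (M : R) : measurable_fun setT g ->
    (forall x, 0 <= g x) -> (forall x, g x <= M) ->
    Ei mu' g - Ei mu g = gamma * (Ei mu' (Kop K' g) - Ei mu (Kop K' g)) +
      gamma * (Ei mu (Kop K' g) - Ei mu (Kop K g)).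
  move=> mg g0 gM.
  exact: step_alg (st' g mg M g0 gM) (st g mg M g0 gM).
have Dbnd (g : S -> R) (M c : R) : measurable_fun setT g ->
    (forall x, 0 <= g x) -> (forall x, g x <= M) -> 0 <= c ->
    (forall x y, `|g x - g y| <= c * dist_S x y) ->
    ((`|Ei mu (Kop K' g) - Ei mu (Kop K g)|)%:E <=
      c%:E * \int[mu]_s Wdist dist_S (K' s) (K s))%E.
  move=> mg g0 gM c0 lip.
  have b1 s := Kop_bnd K' K'1 g mg M g0 gM s.
  have b2 s := Kop_bnd K K1 g mg M g0 gM s.
  apply: (int_diff_le _ mu1' _ _ (Kop_meas _ _ mg g0) (Kop_meas _ _ mg g0) M
    (fun s => proj1 (andP (b1 s))) (fun s => proj2 (andP (b1 s)))
    (fun s => proj1 (andP (b2 s))) (fun s => proj2 (andP (b2 s))) _ W0 c c0).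
  move=> s.
  exact: (W1 dist_S (K' s) (K s) (K'1 s) (K1 s) g mg M g0 gM c c0 lip s).
case Ie : (\int[mu]_s Wdist dist_S (K' s) (K s))%E => [r| |]; last first.
- by rewrite Ie in I0.
- have [gz|gp] := eqVneq gamma 0.
    have e := step g1 M1 mg1 g10 g1M.
    rewrite gz in e.
    rewrite (zero_alg _ _ _ e).
    by rewrite gz mul0r mul0e.
  rewrite mulry gtr0_sg ?mul1e ?leey// divr_gt0//.
  by rewrite lt_def gp gamma0.
have r0 : 0 <= r by rewrite Ie lee_fin in I0.
have ind : forall n (g : S -> R) (M c : R), measurable_fun setT g ->
    (forall x, 0 <= g x) -> (forall x, g x <= M) -> 0 <= c ->
    (forall x y, `|g x - g y| <= c * dist_S x y) ->
    `|Ei mu' g - Ei mu g| <=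
      gamma ^+ n * M + gamma * c * r / (1 - gamma * L_p' * (1 + L_pi')).
  elim=> [|n IH] g M c mg g0 gM c0 lip.
    have /andP[a1 a2] := Ei_bnd mu'1 mg g0 gM.
    have /andP[b1 b2] := Ei_bnd mu1' mg g0 gM.
    have t0 : 0 <= gamma * c * r / (1 - gamma * L_p' * (1 + L_pi')).
      by rewrite divr_ge0 ?mulr_ge0// ltW.
    rewrite expr0 mul1r ler_norml; apply/andP; split; lra.
  rewrite (step g M mg g0 gM).
  have b1 s := Kop_bnd K' K'1 g mg M g0 gM s.
  have hIH := IH (Kop K' g) M (c * (L_p' * (1 + L_pi'))) (Kop_meas _ _ mg g0)
    (fun s => proj1 (andP (b1 s))) (fun s => proj2 (andP (b1 s)))
    (mulr_ge0 c0 (mulr_ge0 L_p'0 (addr_ge0 ler01 L_pi'0)))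
    (W2 _ _ metS metA _ _ _ _ L_pi'0 L_p'0 pi'LC p'LC _ mg _ g0 gM _ c0 lip).
  have hD := Dbnd g M c mg g0 gM c0 lip.
  rewrite Ie in hD.
  have {}hD := efin_le _ _ _ hD.
  apply: le_trans (ind_step _ _ _ _ _ gamma0 hIH hD) _.
  by rewrite exprS ind_alg2.
have gn : `|gamma| < 1 by rewrite ger0_norm.
rewrite -EFinM lee_fin leNgt; apply/negP => hlt.
set D := `|Ei mu' g1 - Ei mu g1| in hlt *.
have ep : 0 < D - gamma / (1 - gamma * L_p' * (1 + L_pi')) * r by rewrite subr_gt0.
have cg := cvg_geometric M1 gn.
have [N _ HN] := @cvgr0_norm_lt _ _ _ _ _ _ cg _ ep.
have := HN N (leqnn N); rewrite /geometric /= => hN.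
have := ind N g1 M1 1 mg1 g10 g1M ler01 lip1'.
rewrite fin_alg// => k1.
apply: (contra_alg _ _ _ _ k1 _ hN).
by rewrite mulrC; exact: ler_norm.
Qed.
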